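(* For $n\ge0$, let $NC_n$ be the dg nilCoxeter algebra over $\mathbb{F}_2$. Then the Grothendieck group $K_0(H(\overline{NC_n}))$ of the homotopy category $H(\overline{NC_n})$ is isomorphic to $\mathbb{Z}$ for $n\in\{0,1\}$ and is zero for $n\ge2$. Consequently $K_0^{\mathbb{F}_2}(H(\overline{NC_n}))\cong\mathbb{F}_2$ for $n\in\{0,1\}$ and $0$ for $n\ge 2$.
   Context: $NC_n$ is the $\mathbb{F}_2$-algebra generated by $\tau_1,\ldots,\tau_{n-1}$ subject to $\tau_i^2=0$, $\tau_i\tau_j=\tau_j\tau_i$ for $|i-j|>1$, and $\tau_i\tau_{i+1}\tau_i=\tau_{i+1}\tau_i\tau_{i+1}$, with each $\tau_i$ in cohomological degree $-1$ and differential determined by $d(\tau_i)=1$ and the Leibniz rule (it has a basis indexed by permutations of $n$ letters; $NC_0=NC_1=\mathbb{F}_2$). It is the endomorphism algebra of $e^{\otimes n}$ in Khovanov's dg monoidal category $\mathcal{U}$. Viewing $NC_n$ as a one-object dg category, $\overline{NC_n}$ is the smallest full dg subcategory of left dg $NC_n$-modules containing the free module $NC_n$ and closed under mapping cones, isomorphisms and degree shifts; $H(\overline{NC_n})$ is its homotopy category (a triangulated category) and $K_0$ is its Grothendieck group. For a category $\mathcal{C}$ with distinguished triangles, $K_0^{\mathbb{F}_2}(\mathcal{C})$ is the $\mathbb{F}_2$-vector space on isomorphism classes of objects modulo $[X]+[Y]+[Z]=0$ for every distinguished triangle. *)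

(* Defs.v *)
From HB Require Import structures.
From mathcomp Require Import all_boot all_order all_algebra.
Unset Printing Implicit Defensive.
Import Order.TTheory GRing.Theory Num.Theory.
Local Open Scope ring_scope.

(* Finite-dimensional left dg modules over the dg nilCoxeter algebra NC_n   *)
(* over F_2, presented by generators tau_1..tau_(n-1) (indexed by 'I_n.-1). *)
(* A module is a graded F_2-vector space F_2^dim with a homogeneous basis:  *)
(* basis vector a has cohomological degree [deg a].  Linear maps act on row *)
(* vectors from the right (x |-> x *m A), so the left action                *)
(* tau_i (tau_j x) corresponds to x *m tau j *m tau i.                      *)
Record dgmod (n : nat) := DGMod {
  dim : nat;
  deg : 'I_dim -> int;
  dmx : 'M['F_2]_dim;
  tau : 'I_n.-1 -> 'M['F_2]_dim
}.
Arguments dim {n} d.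
Arguments deg {n} d _.
Arguments dmx {n} d.
Arguments tau {n} d _.

(* Axioms: d has degree +1, tau_i degree -1, d^2 = 0, the nilCoxeter       *)
(* relations, and the Leibniz rule d(tau_i x) = d(tau_i) x + tau_i dx       *)
(*   = x + tau_i dx   (signs are irrelevant in characteristic 2).           *)
Definition is_dgmod {n} (M : dgmod n) : Prop :=
  (forall a b, dmx M a b != 0 -> deg M b = deg M a + 1) /\
  (forall i a b, tau M i a b != 0 -> deg M b = deg M a - 1) /\
  dmx M *m dmx M = 0 /\
  (forall i, tau M i *m tau M i = 0) /\
  (forall i, tau M i *m dmx M = 1%:M + dmx M *m tau M i) /\
  (forall i j : 'I_n.-1, (i.+1 < j)%N || (j.+1 < i)%N ->
       tau M i *m tau M j = tau M j *m tau M i) /\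
  (forall i j : 'I_n.-1, val j = (val i).+1 ->
       tau M i *m tau M j *m tau M i = tau M j *m tau M i *m tau M j).

(* Morphisms of dg modules of degree k (module maps; no signs in char 2). *)
Definition hom_deg {n} (X Y : dgmod n) (k : int) (F : 'M['F_2]_(dim X, dim Y)) : Prop :=
  (forall a b, F a b != 0 -> deg Y b = deg X a + k) /\
  (forall i, tau X i *m F = F *m tau Y i).

Definition closed_hom {n} (X Y : dgmod n) (F : 'M['F_2]_(dim X, dim Y)) : Prop :=
  hom_deg X Y 0 F /\ dmx X *m F = F *m dmx Y.

Definition null_homotopic {n} (X Y : dgmod n) (F : 'M['F_2]_(dim X, dim Y)) : Prop :=
  exists H : 'M['F_2]_(dim X, dim Y),
    hom_deg X Y (-1) H /\ F = dmx X *m H + H *m dmx Y.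

Definition dg_iso {n} (X Y : dgmod n) : Prop :=
  exists (F : 'M['F_2]_(dim X, dim Y)) (G : 'M['F_2]_(dim Y, dim X)),
    [/\ closed_hom X Y F, closed_hom Y X G, F *m G = 1%:M & G *m F = 1%:M].

Definition homotopy_equiv {n} (X Y : dgmod n) : Prop :=
  exists (F : 'M['F_2]_(dim X, dim Y)) (G : 'M['F_2]_(dim Y, dim X)),
    [/\ closed_hom X Y F, closed_hom Y X G,
        null_homotopic X X (F *m G - 1%:M) & null_homotopic Y Y (G *m F - 1%:M)].

(* Degree shift X[k], with X[k]^j = X^(j+k). *)
Definition shift {n} (k : int) (X : dgmod n) : dgmod n :=
  @DGMod n (dim X) (fun a => deg X a - k) (dmx X) (tau X).

(* Mapping cone of F : X -> Y : Cone(F) = X[1] (+) Y, d(x,y) = (dx, Fx + dy). *)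
Definition cone {n} {X Y : dgmod n} (F : 'M['F_2]_(dim X, dim Y)) : dgmod n :=
  @DGMod n (dim X + dim Y)
    (fun i => match split i with inl a => deg X a - 1 | inr b => deg Y b end)
    (block_mx (dmx X) F 0 (dmx Y))
    (fun i => block_mx (tau X i) 0 0 (tau Y i)).

Definition deg0_cycle {n} (M : dgmod n) (g : 'rV['F_2]_(dim M)) : Prop :=
  (forall a, g 0 a != 0 -> deg M a = 0) /\ g *m dmx M = 0.

(* The free module NC_n (generated by 1, a degree-0 cycle), characterized up *)
(* to dg isomorphism by its universal property: closed degree-0 maps         *)
(* NC_n -> N correspond bijectively to degree-0 cycles of N (via g |-> image *)
(* of the generator).                                                        *)
Definition is_free_NC {n} (M : dgmod n) : Prop :=
  is_dgmod M /\
  exists g : 'rV['F_2]_(dim M), deg0_cycle M g /\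
    forall N : dgmod n, is_dgmod N -> forall y : 'rV['F_2]_(dim N), deg0_cycle N y ->
      exists! F : 'M['F_2]_(dim M, dim N), closed_hom M N F /\ g *m F = y.

Inductive inNCbar {n : nat} : dgmod n -> Prop :=
  | NCbar_free M : is_free_NC M -> inNCbar M
  | NCbar_cone X Y (F : 'M['F_2]_(dim X, dim Y)) :
      inNCbar X -> inNCbar Y -> closed_hom X Y F -> inNCbar (cone F)
  | NCbar_iso X Y : inNCbar X -> is_dgmod Y -> dg_iso X Y -> inNCbar Y
  | NCbar_shift X k : inNCbar X -> inNCbar (shift k X).

(* Additive invariants of H(bar NC_n) with values in an abelian group G:    *)
(* constant on isomorphism classes of H, and [Y] = [X] + [Cone f] for every *)
(* (standard) distinguished triangle X -> Y -> Cone f -> X[1]; every        *)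
(* distinguished triangle is by definition isomorphic in H to such a one.   *)
Definition K0_invariant {n} (G : zmodType) (f : dgmod n -> G) : Prop :=
  (forall X Y, inNCbar X -> inNCbar Y -> homotopy_equiv X Y -> f X = f Y) /\
  (forall X Y (F : 'M['F_2]_(dim X, dim Y)), inNCbar X -> inNCbar Y ->
      closed_hom X Y F -> f Y = f X + f (cone F)).

Definition K0F2_invariant {n} (V : lmodType 'F_2) (f : dgmod n -> V) : Prop :=
  (forall X Y, inNCbar X -> inNCbar Y -> homotopy_equiv X Y -> f X = f Y) /\
  (forall X Y (F : 'M['F_2]_(dim X, dim Y)), inNCbar X -> inNCbar Y ->
      closed_hom X Y F -> f X + f Y + f (cone F) = 0).

(* K_0(H(bar NC_n)) is the universal additive invariant.                    *)
(* K_0 ~= Z : there is an int-valued invariant chi through which every      *)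
(* invariant factors uniquely (Hom(Z,G) ~= G via the image of 1).           *)
Definition K0_iso_Z n : Prop :=
  exists chi : dgmod n -> int, K0_invariant int chi /\
    forall (G : zmodType) (f : dgmod n -> G), K0_invariant G f ->
      exists! g : G, forall X, inNCbar X -> f X = g *~ chi X.

Definition K0_zero n : Prop :=
  forall (G : zmodType) (f : dgmod n -> G), K0_invariant G f ->
    forall X, inNCbar X -> f X = 0.

Definition K0F2_iso_F2 n : Prop :=
  exists chi : dgmod n -> 'F_2, K0F2_invariant (GRing.regular 'F_2) chi /\
    forall (V : lmodType 'F_2) (f : dgmod n -> V), K0F2_invariant V f ->
      exists! v : V, forall X, inNCbar X -> f X = chi X *: v.

Definition K0F2_zero n : Prop :=
  forall (V : lmodType 'F_2) (f : dgmod n -> V), K0F2_invariant V f ->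
    forall X, inNCbar X -> f X = 0.

(* Main.v *)
From mathcomp Require Import all_boot all_algebra zify ring.
From Stdlib Require Import FunctionalExtensionality.
Require Import Defs.
Import GRing.Theory Num.Theory.
Local Open Scope ring_scope.
Set Implicit Arguments. Unset Strict Implicit.

Lemma F2_addxx (x : 'F_2) : x + x = 0.
Proof. by apply: GRing.addrr_pchar2. Qed.

Lemma mx_addxx m n (A : 'M['F_2]_(m,n)) : A + A = 0.
Proof. by apply/matrixP => i j; rewrite !mxE F2_addxx. Qed.

Lemma mx_opp m n (A : 'M['F_2]_(m,n)) : - A = A.
Proof. by rewrite -[-A]addr0 -(mx_addxx A) addrA addNr add0r. Qed.

Lemma F2_one_neq0 : (1 : 'F_2) != 0. Proof. by []. Qed.

Definition mdeg {m p} (dX : 'I_m -> int) (dY : 'I_p -> int) (k : int)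
  (A : 'M['F_2]_(m,p)) := forall a b, A a b != 0 -> dY b = dX a + k.

Lemma mdeg0 m p dX dY k : @mdeg m p dX dY k 0.
Proof. by move=> a b; rewrite mxE eqxx. Qed.

Lemma mdeg1 m dX : @mdeg m m dX dX 0 1%:M.
Proof.
move=> a b; rewrite mxE; case: (eqVneq a b) => [->|]; first by rewrite addr0.
by rewrite mulr0n eqxx.
Qed.

Lemma mdegD m p dX dY k (A B : 'M_(m,p)) :
  mdeg dX dY k A -> mdeg dX dY k B -> mdeg dX dY k (A + B).
Proof.
move=> hA hB a b; rewrite mxE.
case: (eqVneq (A a b) 0) => [->|/hA //]; rewrite add0r; exact: hB.
Qed.

Lemma mdegM m p q dX dY dZ k l (A : 'M_(m,p)) (B : 'M_(p,q)) :
  mdeg dX dY k A -> mdeg dY dZ l B -> mdeg dX dZ (k + l) (A *m B).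
Proof.
move=> hA hB a c; rewrite mxE => nz.
have [b /andP [h1 h2]] : exists b, (A a b != 0) && (B b c != 0).
  apply/existsP; apply: contraNT nz; rewrite negb_exists => /forallP H.
  apply/eqP; apply: big1 => b _; move: (H b); rewrite negb_and !negbK.
  by case/orP => /eqP ->; rewrite ?mul0r ?mulr0.
by rewrite (hB _ _ h2) (hA _ _ h1) addrA.
Qed.

Lemma mdegW m p dX dY k dX' dY' k' (A : 'M_(m,p)) :
  mdeg dX dY k A -> (forall a b, dY b = dX a + k -> dY' b = dX' a + k') ->
  mdeg dX' dY' k' A.
Proof. by move=> hA H a b /hA /H. Qed.

Definition sdeg {m n} (f : 'I_m -> int) (g : 'I_n -> int) (i : 'I_(m+n)) :=
  match split i with inl a => f a | inr b => g b end.

Lemma mdeg_col m1 m2 p f1 f2 g k (A : 'M_(m1,p)) (B : 'M_(m2,p)) :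
  mdeg f1 g k A -> mdeg f2 g k B -> mdeg (sdeg f1 f2) g k (col_mx A B).
Proof.
move=> hA hB i b; rewrite /sdeg; case: split_ordP => a ->.
  by rewrite col_mxEu; apply: hA.
by rewrite col_mxEd; apply: hB.
Qed.

Lemma mdeg_row m p1 p2 f g1 g2 k (A : 'M_(m,p1)) (B : 'M_(m,p2)) :
  mdeg f g1 k A -> mdeg f g2 k B -> mdeg f (sdeg g1 g2) k (row_mx A B).
Proof.
move=> hA hB a i; rewrite /sdeg; case: split_ordP => b ->.
  by rewrite row_mxEl; apply: hA.
by rewrite row_mxEr; apply: hB.
Qed.

Lemma mdeg_block m1 m2 p1 p2 f1 f2 g1 g2 k (A : 'M_(m1,p1)) B C (D : 'M_(m2,p2)) :
  mdeg f1 g1 k A -> mdeg f1 g2 k B -> mdeg f2 g1 k C -> mdeg f2 g2 k D ->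
  mdeg (sdeg f1 f2) (sdeg g1 g2) k (block_mx A B C D).
Proof.
move=> *; rewrite block_mxEv; apply: mdeg_col; exact: mdeg_row.
Qed.

Lemma mdeg_lsub m p1 p2 f g1 g2 k (A : 'M_(m,p1+p2)) :
  mdeg f (sdeg g1 g2) k A -> mdeg f g1 k (lsubmx A).
Proof.
move=> h a b; rewrite mxE => /h; rewrite /sdeg.
by case: split_ordP => c /eqP; rewrite eq_shift // => /eqP <-.
Qed.

Lemma mdeg_rsub m p1 p2 f g1 g2 k (A : 'M_(m,p1+p2)) :
  mdeg f (sdeg g1 g2) k A -> mdeg f g2 k (rsubmx A).
Proof.
move=> h a b; rewrite mxE => /h; rewrite /sdeg.
by case: split_ordP => c /eqP; rewrite eq_shift // => /eqP <-.
Qed.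

Lemma mdeg_cone n (X Y X' Y' : dgmod n) (F : 'M_(dim X, dim Y)) (F' : 'M_(dim X', dim Y'))
  k kB kC (A : 'M_(dim X, dim X')) B C (D : 'M_(dim Y, dim Y')) :
  kB = k - 1 -> kC = k + 1 ->
  mdeg (deg X) (deg X') k A -> mdeg (deg X) (deg Y') kB B ->
  mdeg (deg Y) (deg X') kC C -> mdeg (deg Y) (deg Y') k D ->
  mdeg (deg (cone F)) (deg (cone F')) k (block_mx A B C D).
Proof.
move=> -> -> hA hB hC hD.
apply: (@mdeg_block _ _ _ _ (fun a => deg X a - 1) (deg Y) (fun a => deg X' a - 1) (deg Y')).
- by apply: (mdegW hA) => a b ->; lia.
- by apply: (mdegW hB) => a b ->; lia.
- by apply: (mdegW hC) => a b ->; lia.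
- exact: hD.
Qed.

Lemma cone_dgmod n (X Y : dgmod n) (F : 'M_(dim X, dim Y)) :
  is_dgmod X -> is_dgmod Y -> closed_hom X Y F -> is_dgmod (cone F).
Proof.
move=> [dX1 [tX1 [dX2 [tX2 [lX [cX bX]]]]]] [dY1 [tY1 [dY2 [tY2 [lY [cY bY]]]]]].
move=> [[F0 Ft] Fd].
split; [|split; [|split; [|split; [|split; [|split]]]]] => /=.
- apply: (mdeg_cone (kB:=0) (kC:=2)) => //; try exact: dX1; try exact: dY1; try exact: mdeg0.
- move=> i; apply: (mdeg_cone (kB:=-2) (kC:=0)) => //; try exact: (tX1 i); try exact: (tY1 i); exact: mdeg0.
- rewrite mulmx_block !mulmx0 !mul0mx !addr0 !add0r dX2 dY2 Fd mx_addxx.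
  by rewrite block_mx0.
- move=> i; rewrite mulmx_block !mulmx0 !mul0mx !addr0 !add0r tX2 tY2.
  by rewrite block_mx0.
- move=> i; rewrite !mulmx_block !mulmx0 !mul0mx !addr0 !add0r lX lY.
  rewrite (scalar_mx_block (dim X) (dim Y)) add_block_mx !addr0 !add0r.
  by rewrite Ft.
- move=> i j hij; rewrite !mulmx_block !mulmx0 !mul0mx !addr0 !add0r.
  by rewrite (cX _ _ hij) (cY _ _ hij).
- move=> i j hij; rewrite !mulmx_block !mulmx0 !mul0mx !addr0 !add0r.
  by rewrite !mul0mx (bX _ _ hij) (bY _ _ hij).
Qed.

Lemma shift_dgmod n k (X : dgmod n) : is_dgmod X -> is_dgmod (shift k X).
Proof.
move=> [d1 [t1 rest]]; split; [|split] => //=.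
- by move=> a b /d1 ->; lia.
- by move=> i a b /t1 ->; lia.
Qed.

Definition contr {n} (X : dgmod n) :=
  exists H, hom_deg X X (-1) H /\ 1%:M = dmx X *m H + H *m dmx X.

Lemma closed0 n (X Y : dgmod n) : closed_hom X Y 0.
Proof.
split; [split|]; first exact: mdeg0.
  by move=> i; rewrite mulmx0 mul0mx.
by rewrite mulmx0 mul0mx.
Qed.

Lemma closed1 n (X : dgmod n) : closed_hom X X 1%:M.
Proof.
split; [split|]; first exact: mdeg1.
  by move=> i; rewrite mulmx1 mul1mx.
by rewrite mulmx1 mul1mx.
Qed.

Lemma null0 n (X Y : dgmod n) : null_homotopic X Y 0.
Proof.
exists 0; split; [split|]; first exact: mdeg0.
  by move=> i; rewrite mulmx0 mul0mx.
by rewrite mulmx0 mul0mx addr0.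
Qed.

Lemma iso_heq n (X Y : dgmod n) : dg_iso X Y -> homotopy_equiv X Y.
Proof.
move=> [F [G [cF cG FG GF]]]; exists F, G; split => //.
  by rewrite FG subrr; apply: null0.
by rewrite GF subrr; apply: null0.
Qed.

Lemma contr_heq n (X Y : dgmod n) : contr X -> contr Y -> homotopy_equiv X Y.
Proof.
move=> [hX [[hX0 hXt] hXe]] [hY [[hY0 hYt] hYe]].
exists 0, 0; split; try exact: closed0.
  rewrite mulmx0 sub0r mx_opp; exists hX; split => //.
rewrite mulmx0 sub0r mx_opp; exists hY; split => //.
Qed.

Lemma contr_shift n k (X : dgmod n) : contr X -> contr (shift k X).
Proof.
move=> [h [[h0 ht] he]]; exists h; split => //; split => //=.
by move=> a b /h0 ->; lia.
Qed.

Lemma contr_iso n (X Y : dgmod n) : contr X -> dg_iso X Y -> contr Y.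
Proof.
move=> [h [[h0 ht] he]] [F [G [[[F0 Ft] Fd] [[G0 Gt] Gd] FG GF]]].
exists (G *m h *m F); split; first split.
- by move=> a b /(mdegM (mdegM G0 h0) F0) ->; lia.
- move=> i; rewrite !mulmxA Gt -(mulmxA G) ht mulmxA -(mulmxA (G *m h)) Ft.
  by rewrite !mulmxA.
- rewrite !mulmxA Gd -(mulmxA (G *m h) F) -Fd !mulmxA -mulmxDl.
  rewrite -!(mulmxA G) -mulmxDr -he mulmx1 GF //.
Qed.

Lemma Dleib m p q (dL : 'M['F_2]_m) (dM : 'M_p) (dR : 'M_q) (A : 'M_(m,p)) (B : 'M_(p,q)) :
  dL *m (A *m B) + (A *m B) *m dR = (dL *m A + A *m dM) *m B + A *m (dM *m B + B *m dR).
Proof.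
rewrite mulmxDl mulmxDr !mulmxA -addrA (addrA (A *m dM *m B)).
by rewrite mx_addxx add0r.
Qed.

Lemma Dadd m p (dL : 'M['F_2]_m) (dR : 'M_p) (A B : 'M_(m,p)) :
  dL *m (A + B) + (A + B) *m dR = (dL *m A + A *m dR) + (dL *m B + B *m dR).
Proof. by rewrite mulmxDr mulmxDl addrACA. Qed.

Lemma F2_eq m p (A B : 'M['F_2]_(m,p)) : A + B = 0 -> A = B.
Proof. by move=> h; rewrite -[A]addr0 -(mx_addxx B) addrA h add0r. Qed.

Lemma heq_cone_contr n (X Y : dgmod n) (F : 'M_(dim X, dim Y)) G :
  closed_hom X Y F -> closed_hom Y X G ->
  null_homotopic X X (F *m G - 1%:M) -> null_homotopic Y Y (G *m F - 1%:M) ->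
  contr (cone F).
Proof.
move=> [[F0 Ft] Fd] [[G0 Gt] Gd] [h [[h0 ht] eh]] [k [[k0 kt] ek]].
rewrite mx_opp in eh ek.
set dX := dmx X in Fd Gd eh; set dY := dmx Y in Fd Gd ek.
pose Phi := F *m k + h *m F.
have DF : dX *m F + F *m dY = 0 by rewrite Fd mx_addxx.
have DG : dY *m G + G *m dX = 0 by rewrite Gd mx_addxx.
have DPhi : dX *m Phi + Phi *m dY = 0.
  rewrite /Phi Dadd (Dleib _ dY) (Dleib _ dX) DF -ek -eh.
  rewrite mul0mx mulmx0 add0r addr0 mx_opp mulmxDr mulmxDl mulmx1 mul1mx mulmxA.
  exact: mx_addxx.
exists (block_mx h (h *m Phi) G (k + G *m Phi)); split; first split.
- apply: (mdeg_cone (kB:=-2) (kC:=0)) => //.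
  + by move=> a b /(mdegM h0 (mdegD (mdegM F0 k0) (mdegM h0 F0))) ->; lia.
  + apply: mdegD; first exact: k0.
    by move=> a b /(mdegM G0 (mdegD (mdegM F0 k0) (mdegM h0 F0))) ->; lia.
- move=> i /=; rewrite !mulmx_block !mulmx0 !mul0mx !addr0 !add0r.
  have tPhi : tau X i *m Phi = Phi *m tau Y i.
    by rewrite /Phi mulmxDr mulmxDl !mulmxA Ft ht -!mulmxA kt Ft.
  clearbody Phi.
  rewrite !mulmxDr !mulmxDl !mulmxA ht Gt kt -(mulmxA h) tPhi -(mulmxA G) tPhi.
  by rewrite !mulmxA.
- rewrite /= !mulmx_block !mulmx0 !mul0mx !addr0 !add0r add_block_mx.
  have ePhi : Phi = F *m k + h *m F by [].
  clearbody Phi.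
  rewrite (scalar_mx_block (dim X) (dim Y)); congr block_mx.
  all: rewrite ?mx_opp in ek.
  all: try (move: Gd Fd; rewrite -/dX -/dY => Gd Fd).
  + by rewrite addrAC -eh addrAC mx_addxx add0r.
  + have pt : dX *m (h *m Phi) + h *m Phi *m dY = F *m (G *m Phi) + Phi.
      rewrite (Dleib _ dX) DPhi -eh mulmx0 addr0 mulmxDl mul1mx.
      by rewrite mulmxA.
    rewrite mulmxDr.
    set p := dX *m (h *m Phi) in pt *; set q := F *m k; set r := F *m (G *m Phi).
    set s := h *m F; set t := h *m Phi *m dY in pt *.
    have -> : p + (q + r) + (s + t) = (p + t) + ((q + s) + r).
      rewrite -!addrA; congr (_ + _).
      by rewrite addrCA [s + t]addrC !addrA [in RHS]addrC !addrA [r + q + t]addrAC.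
    rewrite pt /q /s -ePhi [Phi + r]addrC mx_addxx //.
  + by rewrite Gd mx_addxx.
  + have DGPhi : dY *m (G *m Phi) + (G *m Phi) *m dY = 0.
      by rewrite (Dleib _ dX) DG DPhi mul0mx mulmx0 addr0.
    rewrite mulmxDr mulmxDl.
    set a := dY *m k; set b := dY *m (G *m Phi); set c := G *m F.
    set d := k *m dY; set e := G *m Phi *m dY.
    rewrite -!addrA (addrCA c d e) (addrCA b d) addrA (addrCA b c e).
    by rewrite -/a -/d -ek DGPhi addr0 addrAC mx_addxx add0r.
Qed.

Lemma NCbar_dgmod n (X : dgmod n) : inNCbar X -> is_dgmod X.
Proof.
elim=> {X}.
- by move=> M [].
- by move=> X Y F _ hX _ hY cF; apply: cone_dgmod.
- by [].
- by move=> X k _ hX; apply: shift_dgmod.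
Qed.

Lemma free_contr n (M : dgmod n) : (2 <= n)%N -> is_free_NC M -> contr M.
Proof.
move=> n2 [hM [g [[g0 gd] univ]]].
have i0lt : (0 < n.-1)%N by move: n2; clear; case: n => [|[|]].
pose i0 := Ordinal i0lt.
pose X := shift (-1) M.
pose N := @cone n X X 1%:M.
have hN : is_dgmod N.
  by apply: cone_dgmod; [apply: shift_dgmod..|apply: closed1].
have [dM1 [tM1 [dM2 [tM2 [lM _]]]]] := hM.
pose y : 'rV_(dim N) := row_mx g (g *m tau M i0).
have gdeg : mdeg (fun _ : 'I_1 => 0) (deg M) 0 g.
  by move=> i a; rewrite ord1 => /g0 ->; rewrite add0r.
have yc : deg0_cycle N y.
  split.
    have md : mdeg (fun _ : 'I_1 => 0) (deg N) 0 y.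
      apply: (@mdeg_row _ _ _ _ (fun a => deg X a - 1) (deg X)).
        by apply: (mdegW gdeg) => a b /= ->; lia.
      by apply: (mdegW (mdegM gdeg (tM1 i0))) => a b /= ->; lia.
    by move=> a /md ->; rewrite addr0.
  rewrite /y /= mul_row_block gd mulmx0 addr0 mulmx1 -mulmxA lM.
  by rewrite mulmxDr mulmx1 mulmxA gd mul0mx addr0 mx_addxx row_mx0.
have [p [[[[p0 pt] pd] gp] _]] := univ N hN y yc.
pose A := lsubmx p; pose B := rsubmx p.
have ep : p = row_mx A B by rewrite hsubmxK.
move: pt pd gp; rewrite ep /= => pt pd gp.
move: pd; rewrite mul_mx_row mul_row_block mulmx0 addr0 mulmx1.
move=> /eq_row_mx [dA dB].
have tAB : forall i, tau M i *m A = A *m tau M i /\ tau M i *m B = B *m tau M i.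
  move=> i; move: (pt i); rewrite mul_mx_row mul_row_block !mulmx0 addr0 add0r.
  by move=> /eq_row_mx.
move: gp; rewrite mul_mx_row /y => /eq_row_mx [gA gB].
have A0 : mdeg (deg M) (deg M) 0 A.
  have := @mdeg_lsub _ _ _ (deg M) (fun a => deg X a - 1) (deg X) 0 p p0=> h a b /h /=; lia.
have B0 : mdeg (deg M) (deg M) (-1) B.
  have := @mdeg_rsub _ _ _ (deg M) (fun a => deg X a - 1) (deg X) 0 p p0=> h a b /h /=; lia.
have cA : closed_hom M M A.
  by split; [split => // i; case: (tAB i)|].
have A1 : A = 1%:M.
  have [F [_ uF]] := univ M hM g (conj g0 gd).
  by rewrite -(uF A (conj cA gA)) (uF 1%:M (conj (closed1 M) (mulmx1 g))).
exists B; split; first by split => // i; case: (tAB i).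
by rewrite dB -A1 -addrA mx_addxx addr0.
Qed.

Lemma contr_null n (X : dgmod n) : contr X -> null_homotopic X X (- 1%:M).
Proof. by move=> [h [hh he]]; rewrite mx_opp; exists h. Qed.

Lemma contr_cone n (X Y : dgmod n) (F : 'M_(dim X, dim Y)) :
  contr X -> contr Y -> closed_hom X Y F -> contr (cone F).
Proof.
move=> cX cY hF; apply: (heq_cone_contr (G := 0)) => //; first exact: closed0.
  by rewrite mulmx0 sub0r; apply: contr_null.
by rewrite mul0mx sub0r; apply: contr_null.
Qed.

Lemma NCbar_contr n (X : dgmod n) : (2 <= n)%N -> inNCbar X -> contr X.
Proof.
move=> n2; elim=> {X}.
- by move=> M; apply: free_contr.
- by move=> X Y F _ hX _ hY cF; apply: contr_cone.
- by move=> X Y _ hX _ iso; apply: contr_iso iso.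
- by move=> X k _ hX; apply: contr_shift.
Qed.

Lemma lmodF2_addxx (V : lmodType 'F_2) (v : V) : v + v = 0.
Proof. by rewrite -[v]scale1r -scalerDl F2_addxx scale0r. Qed.

Lemma part_ge2 n : (2 <= n)%N -> K0_zero n /\ K0F2_zero n.
Proof.
move=> n2; split.
- move=> G f [fh fc] X hX.
  have hC : inNCbar (@cone n X X 0) by apply: NCbar_cone => //; apply: closed0.
  have := fc X X 0 hX hX (closed0 X X); rewrite -{1}[f X]addr0 => /addrI e.
  rewrite (fh X (@cone n X X 0)) // ?e //.
  by apply: contr_heq; apply: NCbar_contr.
- move=> V f [fh fc] X hX.
  have hC : inNCbar (@cone n X X 0) by apply: NCbar_cone => //; apply: closed0.
  have := fc X X 0 hX hX (closed0 X X); rewrite lmodF2_addxx add0r => e.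
  rewrite (fh X (@cone n X X 0)) // ?e //.
  by apply: contr_heq; apply: NCbar_contr.
Qed.

Lemma rank_diag (F : fieldType) N (v : 'rV[F]_N) :
  \rank (diag_mx v) = (\sum_(a < N) (v ord0 a != 0%R))%N.
Proof.
elim: N v => [|N IH] v.
  by rewrite big_ord0; apply/eqP; rewrite -leqn0 rank_leq_row.
move: v; rewrite -[N.+1]/(1 + N)%N => v.
rewrite -[v]hsubmxK diag_mx_row rank_diag_block_mx IH big_split_ord /=.
congr (_ + _)%N.
  have -> : diag_mx (lsubmx v) = lsubmx v.
    by apply/matrixP => i j; rewrite !ord1 mxE eqxx mulr1n.
  rewrite rank_rV big_ord1; congr nat_of_bool.
  apply/idP/idP.
    apply: contra => /eqP h; apply/eqP/matrixP => i j.
    by move: h; rewrite row_mxEl !ord1 !mxE.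
  by apply: contra => /eqP h; rewrite row_mxEl h mxE.
by apply: eq_bigr => i _; rewrite row_mxEr.
Qed.

Definition sgn (k : int) : int := (-1) ^ k.

Lemma sgnD a b : sgn (a + b) = sgn a * sgn b.
Proof. by rewrite /sgn exprzDr // unitrN1. Qed.

Lemma sgn0 : sgn 0 = 1. Proof. by rewrite /sgn expr0z. Qed.
Lemma sgn1 : sgn 1 = -1. Proof. by rewrite /sgn expr1z. Qed.
Lemma sgnS a : sgn (a + 1) = - sgn a.
Proof. by rewrite sgnD sgn1 mulrN1. Qed.
Lemma sgnB1 a : sgn (a - 1) = - sgn a.
Proof. by rewrite -{2}(subrK 1 a) sgnS opprK. Qed.

Lemma telescope (w R : nat -> int) : (forall i, w i.+1 = - w i) ->
  forall M, \sum_(i < M) w i * (R i.+1 + R i) = w 0%N * R 0%N - w M * R M.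
Proof.
move=> hw; elim=> [|M IH]; first by rewrite big_ord0 subrr.
rewrite big_ord_recr /= IH hw; ring.
Qed.

Lemma chi_contr N (dg : 'I_N -> int) (d H : 'M['F_2]_N) :
  mdeg dg dg 1 d -> mdeg dg dg (-1) H -> d *m d = 0 ->
  1%:M = d *m H + H *m d -> \sum_a sgn (dg a) = 0.
Proof.
move=> hd hH dd e1.
pose E k := diag_mx (\row_a ((dg a == k)%:R : 'F_2)).
have E1 k : E k *m d = d *m E (k + 1).
  apply/matrixP => a b; rewrite mul_diag_mx mul_mx_diag !mxE.
  case: (eqVneq (d a b) 0) => [->|/hd e]; first by rewrite mulr0 mul0r.
  rewrite e mulrC; congr (_ * _%:R); apply/eqP/eqP; lia.
have E2 k : E k *m H = H *m E (k - 1).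
  apply/matrixP => a b; rewrite mul_diag_mx mul_mx_diag !mxE.
  case: (eqVneq (H a b) 0) => [->|/hH e]; first by rewrite mulr0 mul0r.
  rewrite e mulrC; congr (_ * _%:R); apply/eqP/eqP; lia.
have rk k : \rank (E k) = (\sum_a (dg a == k))%N.
  rewrite rank_diag; apply: eq_bigr => a _; rewrite mxE.
  by case: (dg a == k).
have Ez k : (forall a, dg a != k) -> E k = 0.
  move=> h; apply/matrixP => a b; rewrite !mxE (negbTE (h a)).
  by rewrite mul0rn.
pose r k := \rank (E k *m d).
have nk k : \rank (E k) = (r k + r (k - 1)%R)%N.
  apply/eqP; rewrite eqn_leq; apply/andP; split.
    have eE : E k = (E k *m d) *m H + H *m (E (k - 1) *m d).
      by rewrite -{1}[E k]mulmx1 e1 mulmxDr !mulmxA E2 -!mulmxA.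
    rewrite {1}eE; apply: (leq_trans (mxrank_add _ _)).
    by apply: leq_add; [apply: mxrankM_maxl|apply: mxrankM_maxr].
  rewrite -(mxrank_mul_ker (E k) d) -/(r k) leq_add2l; apply: mxrankS.
  rewrite sub_capmx; apply/andP; split.
    by rewrite E1 subrK submxMl.
  by apply/sub_kermxP; rewrite -mulmxA dd mulmx0.
pose B := (\sum_a absz (dg a))%N.
have hB a : (absz (dg a) <= B)%N by rewrite /B (bigD1 a) //= leq_addr.
pose lo : int := - (B%:Z) - 1.
pose M := (2 * B + 3)%N.
have eb a : (absz (dg a - lo) < M)%N by have := hB a; rewrite /lo /M; lia.
have step1 : \sum_a sgn (dg a) =
    \sum_(i < M) sgn (lo + i%:Z) * (\rank (E (lo + i%:Z)))%:R.
  transitivity (\sum_a \sum_(i < M) (dg a == lo + i%:Z)%:R * sgn (lo + i%:Z)).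
    apply: eq_bigr => a _; rewrite (bigD1 (Ordinal (eb a))) //=.
    have -> : dg a == lo + (absz (dg a - lo))%:Z.
      by apply/eqP; have := hB a; rewrite /lo; lia.
    rewrite mul1r big1 ?addr0; first by congr sgn; have := hB a; rewrite /lo; lia.
    move=> i ne; have -> : (dg a == lo + i%:Z) = false; last by rewrite mul0r.
    apply/negbTE/eqP => h; move/eqP: ne; apply; apply: val_inj => /=; lia.
  rewrite exchange_big; apply: eq_bigr => i _.
  by rewrite -mulr_suml mulrC rk natr_sum.
pose R j := (r (lo + j%:Z - 1))%:Z.
have step2 : \sum_(i < M) sgn (lo + i%:Z) * (\rank (E (lo + i%:Z)))%:R =
    \sum_(i < M) sgn (lo + i%:Z) * (R i.+1 + R i).
  apply: eq_bigr => i _; rewrite nk natrD !natz; congr (_ * (_ + _)); rewrite /R; congr (Posz (r _)); lia.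
rewrite step1 step2 (telescope (w := fun i => sgn (lo + i%:Z)) R).
  have -> : R 0%N = 0.
    rewrite /R /r Ez ?mul0mx ?mxrank0 // => a; apply/eqP; have := hB a; rewrite /lo; lia.
  have -> : R M = 0.
    rewrite /R /r Ez ?mul0mx ?mxrank0 // => a; apply/eqP; have := hB a; rewrite /lo /M; lia.
  by rewrite !mulr0 subrr.
by move=> i; rewrite -sgnS; congr sgn; lia.
Qed.

Definition chi {n} (X : dgmod n) : int := \sum_(a < dim X) sgn (deg X a).

Lemma split_l m p (a : 'I_m) : split (lshift p a) = inl a.
Proof. exact: (unsplitK (inl _ a)). Qed.
Lemma split_r m p (a : 'I_p) : split (rshift m a) = inr a.
Proof. exact: (unsplitK (inr _ a)). Qed.

Lemma chi_cone n (X Y : dgmod n) (F : 'M_(dim X, dim Y)) :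
  chi (cone F) = chi Y - chi X.
Proof.
rewrite /chi /= big_split_ord /= addrC; congr (_ + _).
  by apply: eq_bigr => b _; rewrite split_r.
by rewrite -sumrN; apply: eq_bigr => a _; rewrite split_l sgnB1.
Qed.

Lemma chi_contr_X n (X : dgmod n) : is_dgmod X -> contr X -> chi X = 0.
Proof.
move=> [d1 [_ [dd _]]] [h [[h0 _] e]].
exact: (chi_contr d1 h0 dd e).
Qed.

Lemma chi_heq n (X Y : dgmod n) : is_dgmod X -> is_dgmod Y ->
  homotopy_equiv X Y -> chi X = chi Y.
Proof.
move=> hX hY [F [G [cF cG nF nG]]].
have hC := cone_dgmod hX hY cF.
have := chi_contr_X hC (heq_cone_contr cF cG nF nG).
by rewrite chi_cone => /eqP; rewrite subr_eq0 => /eqP.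
Qed.

Lemma sgnN k : sgn (- k) = sgn k.
Proof. by rewrite /sgn -exprz_inv invrN1. Qed.

Lemma chi_shift n k (X : dgmod n) : chi (shift k X) = sgn k * chi X.
Proof.
rewrite /chi /= mulr_sumr; apply: eq_bigr => a _.
by rewrite sgnD sgnN mulrC.
Qed.

Lemma shift_shift n a b (X : dgmod n) : shift a (shift b X) = shift (b + a) X.
Proof.
rewrite /shift /=; congr DGMod; apply: functional_extensionality => x; ring.
Qed.

Lemma shift0 n (X : dgmod n) : shift 0 X = X.
Proof.
case: X => dm dg dd tt; rewrite /shift /=; congr DGMod.
by apply: functional_extensionality => x; rewrite subr0.
Qed.

Lemma int_ind2 (P : int -> Prop) : P 0 -> (forall k, P k <-> P (k + 1)) -> forall k, P k.
Proof.
move=> P0 PS; case=> m.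
  by elim: m => [//|m IH]; rewrite -addn1 PoszD; exact: (proj1 (PS m) IH).
elim: m => [|m IH]; first by apply/PS.
by apply/PS; rewrite (_ : Negz m.+1 + 1 = Negz m) //; lia.
Qed.

Definition M0 n : dgmod n := @DGMod n 1 (fun _ => 0) 0 (fun _ => 0).

Lemma noI n : (n <= 1)%N -> 'I_n.-1 -> False.
Proof. by move=> n1 [i]; case: n n1 => [|[|]]. Qed.

Lemma M0_dgmod n : (n <= 1)%N -> is_dgmod (M0 n).
Proof.
move=> n1; split; [|split; [|split; [|split; [|split; [|split]]]]] => /=.
- exact: mdeg0.
- by move=> i; case: (noI n1 i).
- by rewrite mulmx0.
- by move=> i; case: (noI n1 i).
- by move=> i; case: (noI n1 i).
- by move=> i; case: (noI n1 i).
- by move=> i; case: (noI n1 i).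
Qed.

Lemma M0_free n : (n <= 1)%N -> is_free_NC (M0 n).
Proof.
move=> n1; split; first exact: M0_dgmod.
exists 1%:M; split.
  by split; [|rewrite /= mulmx0].
move=> N hN y [y0 yd]; exists y; split.
  split; last by rewrite mul1mx.
  split; last by rewrite /= mul0mx yd.
  split; last by move=> i; case: (noI n1 i).
  by move=> a b; rewrite ord1 => /y0 ->.
by move=> F [_ <-]; rewrite mul1mx.
Qed.

Lemma closedM n (X Y Z : dgmod n) F G :
  closed_hom X Y F -> closed_hom Y Z G -> closed_hom X Z (F *m G).
Proof.
move=> [[F0 Ft] Fd] [[G0 Gt] Gd]; split; first split.
- by move=> a b /(mdegM F0 G0) ->.
- by move=> i; rewrite mulmxA Ft -mulmxA Gt mulmxA.
- by rewrite mulmxA Fd -mulmxA Gd mulmxA.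
Qed.

Lemma free_iso n (M : dgmod n) : (n <= 1)%N -> is_free_NC M -> dg_iso M (M0 n).
Proof.
move=> n1 [hM [g [[g0 gd] univ]]].
have c1 : deg0_cycle (M0 n) 1%:M by split; [|rewrite /= mulmx0].
have [F [[cF gF] _]] := univ _ (M0_dgmod n1) _ c1.
have cG : closed_hom (M0 n) M g.
  split; last by rewrite /= mul0mx gd.
  split; last by move=> i; case: (noI n1 i).
  by move=> a b; rewrite ord1 => /g0 ->.
exists F, g; split => //.
  have [H [_ uH]] := univ M hM g (conj g0 gd).
  rewrite -(uH (F *m g)); last by split; [apply: closedM cF cG|rewrite mulmxA gF mul1mx].
  by rewrite (uH 1%:M) //; split; [apply: closed1|rewrite mulmx1].
Qed.

Lemma cone1_contr n (X : dgmod n) : contr (@cone n X X 1%:M).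
Proof.
apply: (heq_cone_contr (G := 1%:M)); try exact: closed1.
  by rewrite mulmx1 subrr; apply: null0.
by rewrite mulmx1 subrr; apply: null0.
Qed.

Lemma shift1_heq n (X Y : dgmod n) : contr Y ->
  homotopy_equiv (@cone n X Y 0) (shift 1 X).
Proof.
move=> [hY [[hY0 hYt] hYe]].
exists (col_mx 1%:M 0), (row_mx 1%:M 0); split.
- split; first split.
  + apply: (@mdeg_col _ _ _ (fun a => deg X a - 1) (deg Y)); last exact: mdeg0.
    by move=> a b /(@mdeg1 _ (fun a => deg X a - 1)) /= ->.
  + by move=> i /=; rewrite mul_block_col mul_col_mx !mulmx0 !mul0mx !addr0 mulmx1 mul1mx.
  + by rewrite /= mul_block_col mul_col_mx !mulmx0 !mul0mx !addr0 mulmx1 mul1mx.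
- split; first split.
  + apply: (@mdeg_row _ _ _ _ (fun a => deg X a - 1) (deg Y)); last exact: mdeg0.
    by move=> a b /(@mdeg1 _ (fun a => deg X a - 1)) /= ->.
  + by move=> i /=; rewrite mul_row_block mul_mx_row !mulmx0 !mul0mx !addr0 mulmx1 mul1mx.
  + by rewrite /= mul_row_block mul_mx_row !mulmx0 !mul0mx !addr0 mulmx1 mul1mx.
- rewrite mul_col_row (scalar_mx_block (dim X) (dim Y)) mulmx1 !mulmx0 mul0mx.
  rewrite opp_block_mx add_block_mx subrr !oppr0 !addr0 add0r mx_opp.
  exists (block_mx 0 0 0 hY); split; first split.
  + apply: (mdeg_cone (kB := -2) (kC := 0)) => //; try exact: mdeg0.
  + by move=> i /=; rewrite !mulmx_block !mulmx0 !mul0mx !addr0 hYt.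
  + by rewrite /= !mulmx_block !mulmx0 !mul0mx !addr0 !add0r add_block_mx !addr0 -hYe.
- rewrite mul_row_col mulmx1 mulmx0 addr0 subrr; exact: null0.
Qed.

Lemma fZ_shift1 n (G : zmodType) (f : dgmod n -> G) X :
  K0_invariant G f -> inNCbar X -> f (shift 1 X) = - f X.
Proof.
move=> [fh fc] hX.
have hY : inNCbar (@cone n X X 1%:M) by apply: NCbar_cone => //; apply: closed1.
have fY : f (@cone n X X 1%:M) = 0.
  apply: (@addrI _ (f X)); rewrite addr0; exact: esym (fc X X _ hX hX (closed1 X)).
set Y := @cone n X X 1%:M in hY fY.
have hZ : inNCbar (@cone n X Y 0) by apply: NCbar_cone => //; apply: closed0.
have := fc X Y 0 hX hY (closed0 X Y); rewrite fY => e.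
rewrite -[- f X]addr0 e addKr; apply: esym; apply: fh => //; first exact: NCbar_shift.
exact: shift1_heq (cone1_contr X).
Qed.

Lemma lmodF2_opp (V : lmodType 'F_2) (v : V) : - v = v.
Proof. by rewrite -[- v]addr0 -(lmodF2_addxx v) addrA addNr add0r. Qed.

Lemma fF_shift1 n (V : lmodType 'F_2) (f : dgmod n -> V) X :
  K0F2_invariant V f -> inNCbar X -> f (shift 1 X) = f X.
Proof.
move=> [fh fc] hX.
have hY : inNCbar (@cone n X X 1%:M) by apply: NCbar_cone => //; apply: closed1.
have fY : f (@cone n X X 1%:M) = 0.
  by have := fc X X _ hX hX (closed1 X); rewrite lmodF2_addxx add0r.
set Y := @cone n X X 1%:M in hY fY.
have hZ : inNCbar (@cone n X Y 0) by apply: NCbar_cone => //; apply: closed0.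
have := fc X Y 0 hX hY (closed0 X Y); rewrite fY addr0 => e.
have fZ : f (@cone n X Y 0) = f X.
  by rewrite -[f X]lmodF2_opp -[- f X]addr0 -e addKr.
rewrite -fZ; apply: esym; apply: fh => //; first exact: NCbar_shift.
exact: shift1_heq (cone1_contr X).
Qed.

Lemma fZ_shift n (G : zmodType) (f : dgmod n -> G) X :
  K0_invariant G f -> inNCbar X -> forall k, f (shift k X) = f X *~ sgn k.
Proof.
move=> fi hX; apply: int_ind2; first by rewrite shift0 sgn0 mulr1z.
move=> k; rewrite -shift_shift (fZ_shift1 fi) ?sgnS ?mulrNz; last exact: NCbar_shift.
split => [->|h]; [by []|exact: oppr_inj h].
Qed.

Lemma fF_shift n (V : lmodType 'F_2) (f : dgmod n -> V) X :
  K0F2_invariant V f -> inNCbar X -> forall k, f (shift k X) = f X.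
Proof.
move=> fi hX; apply: int_ind2; first by rewrite shift0.
move=> k; rewrite -shift_shift (fF_shift1 fi) //; exact: NCbar_shift.
Qed.

Lemma F2_opp (x : 'F_2) : - x = x.
Proof. by rewrite -[- x]addr0 -(F2_addxx x) addrA addNr add0r. Qed.

Lemma sgnF2 k : (sgn k)%:~R = 1 :> 'F_2.
Proof. by rewrite /sgn expN1r rmorphXn /= rmorphN1 F2_opp expr1n. Qed.

Lemma part_le1 n : (n <= 1)%N -> K0_iso_Z n /\ K0F2_iso_F2 n.
Proof.
move=> n1.
have hM0 : inNCbar (M0 n) by apply: NCbar_free; apply: M0_free.
have chiM0 : chi (M0 n) = 1 by rewrite /chi big_ord1 sgn0.
have chiI : K0_invariant int (@chi n).
  split.
    by move=> X Y hX hY; apply: chi_heq; apply: NCbar_dgmod.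
  by move=> X Y F _ _ _; rewrite chi_cone addrC subrK.
have heqM : forall M, is_free_NC M -> homotopy_equiv M (M0 n).
  by move=> M hM; apply: iso_heq; apply: free_iso.
split.
- exists (@chi n); split => // G f [fh fc].
  exists (f (M0 n)); split.
    move=> X; elim=> {X}.
    + move=> M hM; have hMb : inNCbar M by apply: NCbar_free.
      rewrite (fh _ _ hMb hM0 (heqM M hM)) ((proj1 chiI) _ _ hMb hM0 (heqM M hM)).
      by rewrite chiM0.
    + move=> X Y F hX IX hY IY cF.
      have hC : inNCbar (cone F) by apply: NCbar_cone.
      have e := fc X Y F hX hY cF.
      rewrite chi_cone mulrzBr -IX -IY e addrC addKr //.
    + move=> X Y hX IX dY iso; have hY : inNCbar Y by apply: NCbar_iso iso.
      rewrite -(fh X Y hX hY (iso_heq iso)) IX.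
      by rewrite ((proj1 chiI) X Y hX hY (iso_heq iso)).
    + move=> X k hX IX.
      by rewrite (fZ_shift (conj fh fc) hX) chi_shift IX mulrC mulrzA.
  by move=> g' h; rewrite (h _ hM0) chiM0 mulr1z.
- pose chi2 : dgmod n -> GRing.regular 'F_2 := fun X => (chi X)%:~R.
  have chi2I : K0F2_invariant (GRing.regular 'F_2) chi2.
    split.
      by move=> X Y hX hY hXY; rewrite /chi2 ((proj1 chiI) X Y hX hY hXY).
    move=> X Y F _ _ _; rewrite /chi2 chi_cone intrB.
    have -> : forall a b : 'F_2, a + b + (b - a) = b + b by move=> a b; ring.
    exact: F2_addxx.
  exists chi2; split => // V f [fh fc].
  exists (f (M0 n)); split.
    move=> X; elim=> {X}.
    + move=> M hM; have hMb : inNCbar M by apply: NCbar_free.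
      rewrite (fh _ _ hMb hM0 (heqM M hM)) /chi2 ((proj1 chiI) _ _ hMb hM0 (heqM M hM)).
      by rewrite chiM0 scale1r.
    + move=> X Y F hX IX hY IY cF.
      have e := fc X Y F hX hY cF.
      have -> : f (cone F) = f X + f Y.
        by rewrite -[f X + f Y]lmodF2_opp -[- _]addr0 -e addKr.
      rewrite /chi2 chi_cone intrB F2_opp IX IY /chi2 scalerDl addrC //.
    + move=> X Y hX IX dY iso; have hY : inNCbar Y by apply: NCbar_iso iso.
      rewrite -(fh X Y hX hY (iso_heq iso)) IX /chi2.
      by rewrite ((proj1 chiI) X Y hX hY (iso_heq iso)).
    + move=> X k hX IX.
      by rewrite (fF_shift (conj fh fc) hX) /chi2 chi_shift intrM sgnF2 mul1r IX.
  by move=> v' h; rewrite (h _ hM0) /chi2 chiM0 scale1r.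
Qed.

Theorem corollary2 (n : nat) :
  ((n <= 1)%N -> K0_iso_Z n /\ K0F2_iso_F2 n) /\
  ((2 <= n)%N -> K0_zero n /\ K0F2_zero n).
Proof. split; [exact: part_le1 | exact: part_ge2]. Qed.
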